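(* Let $\eta:\mathbb{R}\to\mathbb{R}$ be defined by $\eta(x)=\frac32(1-|x|)^2$ for $|x|\le 1$ and $\eta(x)=0$ for $|x|>1$, so that $\hat\eta(k)=\frac{6}{k^3}(k-\sin k)$ for $k\neq 0$ and $\hat\eta(0)=1$. Then for all $k\in\mathbb{R}$, $$\frac{1}{1+\beta k^2}\le \hat\eta(k)\le \frac{1}{1+\alpha k^2},\qquad \alpha=\tfrac{1}{20},\ \beta=\tfrac{7}{40}.$$
   Context: The Fourier transform is $\hat f(k)=\int_{\mathbb{R}} e^{-ikx}f(x)\,\mathrm{d}x$. *)

(* Defs.v *)
From Stdlib Require Import Reals.
From Coquelicot Require Import Coquelicot.
Open Scope R_scope.

Definition expi (t : R) : C := (cos t, sin t).

(* Fourier transform convention: hat f(k) = \int_R e^{-ikx} f(x) dx.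
   [is_fourier f k v] : the improper integral over R converges to v. *)
Definition is_fourier (f : R -> R) (k : R) (v : C) : Prop :=
  is_RInt_gen (fun x => Cmult (expi (- (k * x))) (RtoC (f x)))
    (Rbar_locally m_infty) (Rbar_locally p_infty) v.

Definition eta (x : R) : R :=
  if Rle_dec (Rabs x) 1 then 3 / 2 * (1 - Rabs x) ^ 2 else 0.

(* Main.v *)
Require Import Defs.
From Stdlib Require Import Reals Lra Psatz.
From Coquelicot Require Import Coquelicot.
Open Scope R_scope.

Lemma nonneg_deriv (f df : R -> R) :
  (forall x, is_derive f x (df x)) -> (forall x, 0 <= x -> 0 <= df x) ->
  f 0 = 0 -> forall x, 0 <= x -> 0 <= f x.
Proof.
  intros Hd Hp H0 x Hx.
  destruct (MVT_gen f 0 x df) as [c [Hc Hfc]].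
  - intros y _; apply Hd.
  - intros y _. apply continuity_pt_filterlim. apply (ex_derive_continuous (K:=R_AbsRing) (V:=R_NormedModule)).
    eexists; apply Hd.
  - rewrite Rmin_left in Hc by lra. rewrite Rmax_right in Hc by lra.
    assert (0 <= df c) by (apply Hp; lra).
    rewrite H0 in Hfc. nra.
Qed.

Lemma c0 x : 0 <= 1 - cos x.
Proof. pose proof (COS_bound x); lra. Qed.

Lemma s1 : forall x, 0 <= x -> 0 <= x - sin x.
Proof.
  apply (nonneg_deriv (fun x => x - sin x) (fun x => 1 - cos x)).
  - intros y. auto_derive; auto. field.
  - intros y _; apply c0.
  - cbv beta; rewrite sin_0; field.
Qed.

Lemma c2 : forall x, 0 <= x -> 0 <= cos x - (1 - x^2/2).
Proof.
  apply (nonneg_deriv (fun x => cos x - (1 - x^2/2)) (fun x => x - sin x)).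
  - intros y. auto_derive; auto. field.
  - apply s1.
  - cbv beta; rewrite cos_0; field.
Qed.

Lemma s3 : forall x, 0 <= x -> 0 <= sin x - (x - x^3/6).
Proof.
  apply (nonneg_deriv (fun x => sin x - (x - x^3/6)) (fun x => cos x - (1 - x^2/2))).
  - intros y. auto_derive; auto. field.
  - apply c2.
  - cbv beta; rewrite sin_0; field.
Qed.

Lemma c4 : forall x, 0 <= x -> 0 <= (1 - x^2/2 + x^4/24) - cos x.
Proof.
  apply (nonneg_deriv (fun x => (1 - x^2/2 + x^4/24) - cos x) (fun x => sin x - (x - x^3/6))).
  - intros y. auto_derive; auto. field.
  - apply s3.
  - cbv beta; rewrite cos_0; field.
Qed.

Lemma s5 : forall x, 0 <= x -> 0 <= (x - x^3/6 + x^5/120) - sin x.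
Proof.
  apply (nonneg_deriv (fun x => (x - x^3/6 + x^5/120) - sin x) (fun x => (1 - x^2/2 + x^4/24) - cos x)).
  - intros y. auto_derive; auto. field.
  - apply c4.
  - cbv beta; rewrite sin_0; field.
Qed.

Lemma c6 : forall x, 0 <= x -> 0 <= cos x - (1 - x^2/2 + x^4/24 - x^6/720).
Proof.
  apply (nonneg_deriv (fun x => cos x - (1 - x^2/2 + x^4/24 - x^6/720)) (fun x => (x - x^3/6 + x^5/120) - sin x)).
  - intros y. auto_derive; auto. field.
  - apply s5.
  - cbv beta; rewrite cos_0; field.
Qed.

Lemma s7 : forall x, 0 <= x -> 0 <= sin x - (x - x^3/6 + x^5/120 - x^7/5040).
Proof.
  apply (nonneg_deriv (fun x => sin x - (x - x^3/6 + x^5/120 - x^7/5040)) (fun x => cos x - (1 - x^2/2 + x^4/24 - x^6/720))).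
  - intros y. auto_derive; auto. field.
  - apply c6.
  - cbv beta; rewrite sin_0; field.
Qed.

Lemma PI_ub : PI < 3.2.
Proof.
  destruct (Rlt_or_le PI 3.2) as [h|h]; auto.
  pose proof (c4 1.6 ltac:(lra)).
  pose proof (cos_ge_0 1.6 ltac:(pose proof PI_RGT_0; lra) ltac:(lra)).
  lra.
Qed.

Lemma c8 : forall x, 0 <= x -> 0 <= (1 - x^2/2 + x^4/24 - x^6/720 + x^8/40320) - cos x.
Proof.
  apply (nonneg_deriv (fun x => (1 - x^2/2 + x^4/24 - x^6/720 + x^8/40320) - cos x)
     (fun x => sin x - (x - x^3/6 + x^5/120 - x^7/5040))).
  - intros y. auto_derive; auto. field.
  - apply s7.
  - cbv beta; rewrite cos_0; field.
Qed.

Lemma PI_ub2 : PI < 3.15.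
Proof.
  destruct (Rlt_or_le PI 3.15) as [h|h]; auto.
  pose proof (c8 1.575 ltac:(lra)).
  pose proof (cos_ge_0 1.575 ltac:(pose proof PI_RGT_0; lra) ltac:(lra)).
  lra.
Qed.

Lemma PI_lb : 3 < PI.
Proof. pose proof PI2_3_2; lra. Qed.

Lemma sin_mid k : 8.2 <= k <= 11.6 -> sin k <= 0.97.
Proof.
  intros Hk.
  assert (E: sin k = sin (3*PI - k)).
  { replace (3*PI - k) with (PI - (k - 2*PI)) by ring.
    rewrite sin_PI_x.
    rewrite <- (sin_period (k - 2*PI) 1). f_equal. simpl. ring. }
  rewrite E. pose proof PI_ub2. pose proof PI_lb.
  destruct (Rle_or_lt 0 (3*PI - k)) as [h|h].
  - pose proof (s5 _ h). set (w := 3*PI - k) in *.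
    assert (w <= 1.25) by (unfold w; lra).
    assert (w - w^3/6 + w^5/120 <= 0.97).
    { assert (0 <= w^3) by (apply pow_le; lra).
      assert (w^5 <= 1.5625 * w^3).
      { replace (w^5) with (w^3*w^2) by ring. rewrite (Rmult_comm 1.5625).
        apply Rmult_le_compat_l; [lra| nra]. }
      assert (0 <= (1.25 - w) * (1 - 0.154*(1.5625 + 1.25*w + w^2))).
      { apply Rmult_le_pos; nra. }
      nra. }
    lra.
  - replace (3*PI - k) with (- (k - 3*PI)) by ring. rewrite sin_neg.
    assert (0 <= sin (k - 3*PI)) by (apply sin_ge_0; lra). lra.
Qed.

Lemma upper_poly k s : 0 < k -> -1 <= s ->
  (k <= 3.6 -> k - k^3/6 + k^5/120 - k^7/5040 <= s) ->
  6*(k-s)*(20+k^2) <= 20*k^3.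
Proof.
  intros Hk Hs1 Ht.
  destruct (Rle_or_lt k 3.6) as [h|h].
  - specialize (Ht h).
    assert (E: 20*k^3 - 6*(k - (k - k^3/6 + k^5/120 - k^7/5040))*(20+k^2)
              = k^7 * (22 - k^2)/840) by field.
    assert (0 <= k^7 * (22 - k^2)) by (apply Rmult_le_pos; [apply pow_le; lra| nra]).
    assert (0 < 20 + k^2) by nra.
    nra.
  - assert (0 <= 7*k^3 - 3*k^2 - 60*k - 60).
    { assert (0 <= k - 3.6) by lra. nra. }
    nra.
Qed.

Lemma lower_poly k s : 0 < k -> s <= 1 ->
  (k <= 3.7 -> s <= k - k^3/6 + k^5/120) ->
  (8.2 <= k <= 11.6 -> s <= 0.97) ->
  40*k^3 <= 6*(k-s)*(40+7*k^2).
Proof.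
  intros Hk Hs1 Ht Hm.
  assert (P: 0 < 40 + 7*k^2) by nra.
  destruct (Rle_or_lt k 3.7) as [h|h].
  - specialize (Ht h).
    assert (E: 6*(k - (k - k^3/6 + k^5/120))*(40+7*k^2) - 40*k^3
              = k^5 * (100 - 7*k^2)/20) by field.
    assert (0 <= k^5 * (100 - 7*k^2)) by (apply Rmult_le_pos; [apply pow_le; lra| nra]).
    nra.
  - destruct (Rle_or_lt k 8.2) as [h2|h2].
    + assert (0 <= k^3 - 21*k^2 + 120*k - 120).
      { assert (q: k^2 - 12.8*k + 15.04 <= 0) by nra.
        assert (0 <= (8.2 - k) * -(k^2 - 12.8*k + 15.04)) by (apply Rmult_le_pos; lra).
        nra. }
      nra.
    + destruct (Rle_or_lt k 11.6) as [h3|h3].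
      * specialize (Hm (conj (Rlt_le _ _ h2) h3)).
        assert (0 <= 2*k^3 - 40.74*k^2 + 240*k - 232.8).
        { assert (0 <= (k-9.26)^2*(2*k - 3.7)) by (apply Rmult_le_pos; [apply pow2_ge_0|lra]). nra. }
        nra.
      * assert (0 <= k^3 - 21*k^2 + 120*k - 120).
        { assert (0 <= k^2 - 9.4*k + 10.96) by nra.
          assert (0 <= (k - 11.6) * (k^2 - 9.4*k + 10.96)) by (apply Rmult_le_pos; lra). nra. }
        nra.
Qed.

Lemma frac_le a b c d : 0 < b -> 0 < d -> a*d <= c*b -> a/b <= c/d.
Proof.
  intros hb hd h.
  replace (a/b) with ((a*d) * / (b*d)) by (field; lra).
  replace (c/d) with ((c*b) * / (b*d)) by (field; lra).
  apply Rmult_le_compat_r; [| exact h].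
  left; apply Rinv_0_lt_compat; nra.
Qed.

Lemma ineq_pos k : 0 < k ->
  1/(1+7/40*k^2) <= 6/k^3*(k - sin k) /\ 6/k^3*(k-sin k) <= 1/(1+1/20*k^2).
Proof.
  intros hk.
  assert (k3: 0 < k^3) by (apply pow_lt; lra).
  replace (6/k^3*(k - sin k)) with ((6*(k - sin k))/k^3) by (field; lra).
  pose proof (SIN_bound k).
  split.
  - replace (1/(1+7/40*k^2)) with (40/(40+7*k^2)) by (field; nra).
    apply frac_le; [nra|lra|].
    pose proof (lower_poly k (sin k) hk ltac:(lra)
      (fun h => ltac:(pose proof (s5 k ltac:(lra)); lra))
      (fun h => sin_mid k h)). nra.
  - replace (1/(1+1/20*k^2)) with (20/(20+k^2)) by (field; nra).
    apply frac_le; [lra|nra|].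
    pose proof (upper_poly k (sin k) hk ltac:(lra)
      (fun h => ltac:(pose proof (s7 k ltac:(lra)); lra))). nra.
Qed.

Lemma ineq_all k : k <> 0 ->
  1/(1+7/40*k^2) <= 6/k^3*(k - sin k) /\ 6/k^3*(k-sin k) <= 1/(1+1/20*k^2).
Proof.
  intros hk. destruct (Rlt_or_le 0 k) as [h|h].
  - now apply ineq_pos.
  - assert (h': 0 < -k) by lra. pose proof (ineq_pos _ h') as H.
    replace (6/(-k)^3*(-k - sin (-k))) with (6/k^3*(k - sin k)) in H
      by (rewrite sin_neg; field; lra).
    replace ((-k)^2) with (k^2) in H by ring. exact H.
Qed.

Definition ig (k : R) (x : R) : C := Cmult (expi (- (k * x))) (RtoC (eta x)).

Lemma eta_out x : 1 < Rabs x -> eta x = 0.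
Proof. intros h. unfold eta. destruct (Rle_dec (Rabs x) 1); [lra|auto]. Qed.

Lemma ig_zero k x : 1 < Rabs x -> ig k x = zero.
Proof.
  intros h. unfold ig. rewrite eta_out by auto.
  unfold Cmult, RtoC, expi; simpl. apply injective_projections; simpl; unfold zero; simpl; ring.
Qed.

Lemma gen k l : is_RInt (ig k) (-1) 1 l -> is_fourier eta k l.
Proof.
  intros H. unfold is_fourier, is_RInt_gen, filterlimi, filter_le, filtermapi.
  intros P HP.
  apply (Filter_prod _ _ _ (fun a => a < -1) (fun b => 1 < b)).
  - exists (-1). auto.
  - exists 1. auto.
  - intros a b ha hb. exists l. split; [| apply locally_singleton; exact HP].
    simpl.
    assert (Z1: is_RInt (ig k) a (-1) zero).
    { apply is_RInt_ext with (fun _ => zero).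
      - intros x hx. rewrite Rmin_left in hx by lra. rewrite Rmax_right in hx by lra.
        symmetry; apply ig_zero. rewrite Rabs_left by lra. lra.
      - pose proof (is_RInt_const a (-1) (@zero C_R_NormedModule)) as C0.
        rewrite (scal_zero_r (K:=R_AbsRing) (V:=C_R_NormedModule)) in C0. exact C0. }
    assert (Z2: is_RInt (ig k) 1 b zero).
    { apply is_RInt_ext with (fun _ => zero).
      - intros x hx. rewrite Rmin_left in hx by lra. rewrite Rmax_right in hx by lra.
        symmetry; apply ig_zero. rewrite Rabs_right by lra. lra.
      - pose proof (is_RInt_const 1 b (@zero C_R_NormedModule)) as C0.
        rewrite (scal_zero_r (K:=R_AbsRing) (V:=C_R_NormedModule)) in C0. exact C0. }
    pose proof (is_RInt_Chasles _ _ _ _ _ _ Z1 H) as H1.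
    pose proof (is_RInt_Chasles _ _ _ _ _ _ H1 Z2) as H2.
    rewrite plus_zero_l, plus_zero_r in H2. exact H2.
Qed.

Lemma pair_int k u w : is_RInt (fun x => fst (ig k x)) (-1) 1 u ->
  is_RInt (fun x => snd (ig k x)) (-1) 1 w -> is_RInt (ig k) (-1) 1 (u, w).
Proof.
  intros H1 H2. apply (is_RInt_fct_extend_pair (U:=R_NormedModule) (V:=R_NormedModule)); auto.
Qed.

Lemma integ (F f : R -> R) a b l : a <= b ->
  (forall x, is_derive F x (f x)) -> (forall x, ex_derive f x) ->
  F b - F a = l -> is_RInt f a b l.
Proof.
  intros hab hd hc hl.
  replace l with (minus (F b) (F a)) by (rewrite <- hl; reflexivity).
  apply (is_RInt_derive (V:=R_CompleteNormedModule)).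
  - intros; apply hd.
  - intros x _. apply (ex_derive_continuous (K:=R_AbsRing) (V:=R_NormedModule)). apply hc.
Qed.

Lemma fst_ig k x : fst (ig k x) = cos (k*x) * eta x.
Proof. unfold ig, Cmult, expi, RtoC; simpl. rewrite cos_neg. ring. Qed.
Lemma snd_ig k x : snd (ig k x) = - sin (k*x) * eta x.
Proof. unfold ig, Cmult, expi, RtoC; simpl. rewrite sin_neg. ring. Qed.

Lemma eta_pos x : 0 <= x <= 1 -> eta x = 3/2*(1-x)^2.
Proof. intros h. unfold eta. rewrite Rabs_right by lra.
  destruct (Rle_dec x 1); [auto|lra]. Qed.
Lemma eta_neg x : -1 <= x <= 0 -> eta x = 3/2*(1+x)^2.
Proof. intros h. unfold eta. rewrite Rabs_left1 by lra.
  destruct (Rle_dec (-x) 1); [f_equal; ring|lra]. Qed.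

Lemma split_int (g : R -> R) l l1 l2 (g1 g2 : R -> R) : l = l1 + l2 ->
  (forall x, 0 <= x <= 1 -> g x = g1 x) -> (forall x, -1 <= x <= 0 -> g x = g2 x) ->
  is_RInt g2 (-1) 0 l1 -> is_RInt g1 0 1 l2 -> is_RInt g (-1) 1 l.
Proof.
  intros hl e1 e2 h1 h2. rewrite hl.
  apply (is_RInt_Chasles g (-1) 0 1 l1 l2).
  - apply is_RInt_ext with g2; auto.
    intros x hx. rewrite Rmin_left in hx by lra. rewrite Rmax_right in hx by lra.
    symmetry; apply e2; lra.
  - apply is_RInt_ext with g1; auto.
    intros x hx. rewrite Rmin_left in hx by lra. rewrite Rmax_right in hx by lra.
    symmetry; apply e1; lra.
Qed.

Lemma re_int k : k <> 0 ->
  is_RInt (fun x => fst (ig k x)) (-1) 1 (6/k^3*(k - sin k)).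
Proof.
  intros hk.
  apply (split_int _ _ (3/k^3*(k - sin k)) (3/k^3*(k - sin k)) (fun x => 3/2*(1-x)^2*cos (k*x)) (fun x => 3/2*(1+x)^2*cos (k*x))).
  - field; auto.
  - intros x h. rewrite fst_ig, eta_pos by auto. ring.
  - intros x h. rewrite fst_ig, eta_neg by auto. ring.
  - apply (integ (fun x => 3/2*((1+x)^2*sin (k*x)/k + 2*(1+x)*cos (k*x)/k^2 - 2*sin (k*x)/k^3))).
    + lra.
    + intros x. auto_derive; auto. field; auto.
    + intros x. auto_derive; auto.
    + replace (k * -1) with (-k) by ring. rewrite Rmult_0_r, sin_neg, cos_neg, sin_0, cos_0.
      field; auto.
  - apply (integ (fun x => 3/2*((1-x)^2*sin (k*x)/k - 2*(1-x)*cos (k*x)/k^2 - 2*sin (k*x)/k^3))).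
    + lra.
    + intros x. auto_derive; auto. field; auto.
    + intros x. auto_derive; auto.
    + rewrite Rmult_0_r, Rmult_1_r, sin_0, cos_0. field; auto.
Qed.

Lemma im_int k : k <> 0 -> is_RInt (fun x => snd (ig k x)) (-1) 1 0.
Proof.
  intros hk.
  apply (split_int _ _ (-3/2*(-1/k + 2/k^3 - 2*cos k/k^3)) (3/2*(-1/k + 2/k^3 - 2*cos k/k^3)) (fun x => -3/2*(1-x)^2*sin (k*x)) (fun x => -3/2*(1+x)^2*sin (k*x))).
  - field; auto.
  - intros x h. rewrite snd_ig, eta_pos by auto. field.
  - intros x h. rewrite snd_ig, eta_neg by auto. field.
  - apply (integ (fun x => -3/2*(-(1+x)^2*cos (k*x)/k + 2*(1+x)*sin (k*x)/k^2 + 2*cos (k*x)/k^3))).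
    + lra.
    + intros x. auto_derive; auto. field; auto.
    + intros x. auto_derive; auto.
    + replace (k * -1) with (-k) by ring. rewrite Rmult_0_r, sin_neg, cos_neg, sin_0, cos_0.
      field; auto.
  - apply (integ (fun x => -3/2*(-(1-x)^2*cos (k*x)/k - 2*(1-x)*sin (k*x)/k^2 + 2*cos (k*x)/k^3))).
    + lra.
    + intros x. auto_derive; auto. field; auto.
    + intros x. auto_derive; auto.
    + rewrite Rmult_0_r, Rmult_1_r, sin_0, cos_0. field; auto.
Qed.

Lemma re_int0 : is_RInt (fun x => fst (ig 0 x)) (-1) 1 1.
Proof.
  apply (split_int _ _ (/2) (/2) (fun x => 3/2*(1-x)^2) (fun x => 3/2*(1+x)^2)).
  - field.
  - intros x h. rewrite fst_ig, eta_pos by auto. rewrite Rmult_0_l, cos_0. ring.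
  - intros x h. rewrite fst_ig, eta_neg by auto. rewrite Rmult_0_l, cos_0. ring.
  - apply (integ (fun x => /2*(1+x)^3)); [lra| intros x; auto_derive; auto; field
           | intros x; auto_derive; auto | field].
  - apply (integ (fun x => -/2*(1-x)^3)); [lra| intros x; auto_derive; auto; field
           | intros x; auto_derive; auto | field].
Qed.

Lemma im_int0 : is_RInt (fun x => snd (ig 0 x)) (-1) 1 0.
Proof.
  apply is_RInt_ext with (fun _ => 0).
  - intros x _. rewrite snd_ig, Rmult_0_l, sin_0, Ropp_0, Rmult_0_l. reflexivity.
  - pose proof (is_RInt_const (V:=R_NormedModule) (-1) 1 0) as C0.
    unfold scal in C0; simpl in C0; unfold mult in C0; simpl in C0; rewrite Rmult_0_r in C0.
    exact C0.
Qed.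

Theorem mainTheorem2 :
  forall k : R,
    exists v : R,
      is_fourier eta k (RtoC v) /\
      v = (if Req_EM_T k 0 then 1 else 6 / k ^ 3 * (k - sin k)) /\
      1 / (1 + 7 / 40 * k ^ 2) <= v /\ v <= 1 / (1 + 1 / 20 * k ^ 2).
Proof.
  intros k. exists (if Req_EM_T k 0 then 1 else 6 / k ^ 3 * (k - sin k)).
  split; [| split; [reflexivity|]]; destruct (Req_EM_T k 0) as [e|ne].
  - subst. apply gen. apply pair_int; [apply re_int0 | apply im_int0].
  - apply gen. apply pair_int; [apply re_int; auto | apply im_int; auto].
  - subst. replace (1/(1+7/40*0^2)) with 1 by field.
    replace (1/(1+1/20*0^2)) with 1 by field. lra.
  - apply ineq_all; auto.
Qed.
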